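(* Let $\theta\in(0,\pi)$. Then for all $x,y\in S_\theta$, $$s_{S_\theta}(x,y)\le{\rm th}(\rho_{S_\theta}(x,y)/2)\le(\pi/\theta)\sin(\theta/2)\,s_{S_\theta}(x,y),$$ and this inequality is sharp.
   Context: $S_\theta=\{x\in\mathbb{C}:0<\arg(x)<\theta\}$. For a domain $G\subsetneq\mathbb{C}$, $s_G(x,y)=\frac{|x-y|}{\inf_{z\in\partial G}(|x-z|+|z-y|)}$. The hyperbolic metric of $\mathbb{H}^2=\{z:{\rm Im}\,z>0\}$ satisfies ${\rm th}(\rho_{\mathbb{H}^2}(u,v)/2)=|u-v|/|u-\overline{v}|$, and $\rho_{S_\theta}(x,y)=\rho_{\mathbb{H}^2}(x^{\pi/\theta},y^{\pi/\theta})$ (principal branch power, a conformal map of $S_\theta$ onto $\mathbb{H}^2$). *)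

(* Defs.v *)
From Stdlib Require Import Reals Lra.
From Coquelicot Require Import Coquelicot.
Open Scope R_scope.

(* Principal argument of z <> 0, with values in (-PI, PI]. *)
Definition Carg (z : C) : R :=
  if Rle_dec 0 (Im z) then acos (Re z / Cmod z) else - acos (Re z / Cmod z).

(* Principal branch power z^a = |z|^a e^{i a arg z} (z <> 0). *)
Definition Cpow_pr (z : C) (a : R) : C :=
  (Rpower (Cmod z) a * cos (a * Carg z), Rpower (Cmod z) a * sin (a * Carg z)).

Definition sector (theta : R) (x : C) : Prop :=
  x <> 0%C /\ 0 < Carg x /\ Carg x < theta.

Definition boundary (G : C -> Prop) (z : C) : Prop :=
  forall eps : R, 0 < eps ->
    (exists w, G w /\ Cmod (w - z) < eps) /\ (exists w, ~ G w /\ Cmod (w - z) < eps).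

Definition s_metric (G : C -> Prop) (x y : C) : R :=
  Cmod (x - y) /
  real (Glb_Rbar (fun t => exists z, boundary G z /\ t = Cmod (x - z) + Cmod (z - y))).

Definition th (t : R) : R := (exp t - exp (- t)) / (exp t + exp (- t)).

(* Hyperbolic metric of the upper half plane, i.e. the unique rho >= 0 with
   th(rho/2) = |u-v|/|u - conj v|:  rho = ln ((|u-conj v|+|u-v|)/(|u-conj v|-|u-v|)). *)
Definition rho_H (u v : C) : R :=
  ln ((Cmod (u - Cconj v) + Cmod (u - v)) / (Cmod (u - Cconj v) - Cmod (u - v))).

(* Hyperbolic metric of S_theta via the conformal map x |-> x^(PI/theta). *)
Definition rho_S (theta : R) (x y : C) : R :=
  rho_H (Cpow_pr x (PI / theta)) (Cpow_pr y (PI / theta)).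

(* Main.v *)
Require Import Defs.
From Stdlib Require Import Reals Lra Psatz.
From Coquelicot Require Import Coquelicot.
Open Scope R_scope.

Lemma mono (f df : R -> R) (a b : R) : a <= b ->
  (forall x, a <= x <= b -> is_derive f x (df x)) ->
  (forall x, a <= x <= b -> 0 <= df x) -> f a <= f b.
Proof.
  intros Hab Hd Hp.
  destruct (MVT_gen f a b df) as [c [Hc Heq]].
  - intros x Hx. apply Hd. rewrite Rmin_left in Hx by lra. rewrite Rmax_right in Hx by lra. lra.
  - intros x Hx. rewrite Rmin_left in Hx by lra. rewrite Rmax_right in Hx by lra.
    apply continuity_pt_filterlim. apply (ex_derive_continuous (K:=R_AbsRing) (V:=R_NormedModule)). eexists. apply Hd. lra.
  - rewrite Rmin_left in Hc by lra. rewrite Rmax_right in Hc by lra.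
    assert (0 <= df c * (b - a)) by (apply Rmult_le_pos; [apply Hp; lra | lra]). lra.
Qed.

Lemma cos_le_mono x y : 0 <= x -> x <= y -> y <= PI -> cos y <= cos x.
Proof.
  intros. destruct (Req_dec x y). subst; lra.
  left; apply cos_decreasing_1; lra.
Qed.

Lemma F1 a u : 1 <= a -> 0 <= u -> a * u <= PI -> sin (a * u) <= a * sin u.
Proof.
  intros Ha Hu Hau.
  assert (H := mono (fun v => a * sin v - sin (a * v)) (fun v => a * cos v - a * cos (a * v)) 0 u Hu).
  simpl in H. rewrite Rmult_0_r, sin_0 in H.
  assert (0 <= a * sin u - sin (a * u)); [|lra].
  replace 0 with (a * 0 - 0) by ring. apply H.
  - intros x Hx. auto_derive; auto. ring.
  - intros x Hx. assert (cos (a * x) <= cos x). apply cos_le_mono; nra.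
    nra.
Qed.

Ltac fexp := rewrite ?exp_Ropp; field; repeat split; apply Rgt_not_eq, exp_pos.

Definition sh u := (exp u - exp (- u)) / 2.
Definition ch u := (exp u + exp (- u)) / 2.

Lemma ch2 u : ch u ^ 2 = 1 + sh u ^ 2.
Proof. unfold ch, sh. rewrite exp_Ropp. field. apply Rgt_not_eq, exp_pos. Qed.

Lemma exp_ge1 x : 0 <= x -> 1 <= exp x.
Proof. intros. destruct (Req_dec x 0). subst; rewrite exp_0; lra. rewrite <- exp_0. left; apply exp_increasing; lra. Qed.

Lemma exp_le_mono x y : x <= y -> exp x <= exp y.
Proof. intros. destruct (Req_dec x y). subst; lra. left; apply exp_increasing; lra. Qed.

Lemma sh_ge0 u : 0 <= u -> 0 <= sh u.
Proof. intros. unfold sh. assert (exp (-u) <= exp u) by (apply exp_le_mono; lra). lra. Qed.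

Lemma sh_gt0 u : 0 < u -> 0 < sh u.
Proof. intros. unfold sh. assert (exp (-u) < exp u) by (apply exp_increasing; lra). lra. Qed.

Lemma sh_opp u : sh (- u) = - sh u.
Proof. unfold sh. rewrite Ropp_involutive. field. Qed.

Lemma ch_mono x y : 0 <= x -> x <= y -> ch x <= ch y.
Proof.
  intros. unfold ch. rewrite !exp_Ropp.
  assert (1 <= exp x) by (apply exp_ge1; lra).
  assert (exp x <= exp y) by (apply exp_le_mono; lra).
  set (E1 := exp x) in *. set (E2 := exp y) in *.
  assert (/E2 <= /E1) by (apply Rinv_le_contravar; lra).
  assert (E1 * E2 >= 1) by nra.
  assert (H5 : (E2 + /E2) - (E1 + /E1) = (E2 - E1) * (1 - /(E1*E2))).
  { field. lra. }
  assert (/(E1*E2) <= 1). { rewrite <- Rinv_1. apply Rinv_le_contravar; lra. }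
  assert (0 <= (E2 - E1) * (1 - /(E1*E2))) by (apply Rmult_le_pos; lra). lra.
Qed.

Lemma is_derive_sh x : is_derive sh x (ch x).
Proof. unfold sh, ch. auto_derive; auto. field. Qed.
Lemma is_derive_ch x : is_derive ch x (sh x).
Proof. unfold sh, ch. auto_derive; auto. field. Qed.

Lemma mono0 (f df : R -> R) (u : R) : 0 <= u -> f 0 = 0 ->
  (forall x, 0 <= x <= u -> is_derive f x (df x)) ->
  (forall x, 0 <= x <= u -> 0 <= df x) -> 0 <= f u.
Proof. intros Hu H0 Hd Hp. rewrite <- H0. apply (mono f df); auto. Qed.

Lemma sh0 : sh 0 = 0.
Proof. unfold sh. rewrite Ropp_0. field. Qed.
Lemma ch0 : ch 0 = 1.
Proof. unfold ch. rewrite Ropp_0, exp_0. field. Qed.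

Lemma F2 a u : 1 <= a -> 0 <= u -> a * sh u <= sh (a * u).
Proof.
  intros Ha Hu.
  assert (0 <= sh (a * u) - a * sh u); [|lra].
  apply (mono0 (fun v => sh (a * v) - a * sh v) (fun v => a * ch (a * v) - a * ch v)); auto.
  - rewrite Rmult_0_r, sh0. ring.
  - intros x Hx. unfold sh, ch. auto_derive; auto. fexp.
  - intros x Hx. assert (ch x <= ch (a * x)) by (apply ch_mono; nra). nra.
Qed.

Lemma omega_ge0 u : 0 <= u -> u <= sh u * ch u.
Proof.
  intros Hu. assert (0 <= sh u * ch u - u); [|lra].
  apply (mono0 (fun v => sh v * ch v - v) (fun v => 2 * sh v ^ 2)); auto.
  - rewrite sh0. ring.
  - intros x Hx. unfold sh, ch. auto_derive; auto. fexp.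
  - intros. nra.
Qed.

Definition psi u := sh u - u * ch u + sh u ^ 3 / 3.

Lemma psi_ge0 u : 0 <= u -> 0 <= psi u.
Proof.
  intros Hu. unfold psi.
  apply (mono0 (fun v => sh v - v * ch v + sh v ^ 3 / 3) (fun v => sh v * (sh v * ch v - v))); auto.
  - cbv beta. rewrite sh0, ch0. field.
  - intros x Hx. unfold sh, ch. auto_derive; auto. fexp.
  - intros x Hx. apply Rmult_le_pos. apply sh_ge0; lra. assert (x <= sh x * ch x) by (apply omega_ge0; lra). lra.
Qed.

Lemma kappa_mono t1 t2 : 0 < t1 -> t1 <= t2 ->
  t1 ^ 2 / sh t1 ^ 2 + t1 ^ 2 / 3 <= t2 ^ 2 / sh t2 ^ 2 + t2 ^ 2 / 3.
Proof.
  intros H1 H2.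
  apply (mono (fun v => v ^ 2 / sh v ^ 2 + v ^ 2 / 3) (fun v => 2 * v * psi v / sh v ^ 3)); auto.
  - intros x Hx. assert (0 < sh x) by (apply sh_gt0; lra).
    unfold psi. unfold sh in *. unfold ch. auto_derive. { apply Rgt_not_eq. nra. } field. lra.
  - intros x Hx. assert (0 < sh x) by (apply sh_gt0; lra).
    assert (0 <= psi x) by (apply psi_ge0; lra).
    apply Rmult_le_pos. nra. left. apply Rinv_0_lt_compat. apply pow_lt. lra.
Qed.

Lemma F7 a t : 1 <= a -> 0 < t -> / sh t ^ 2 - a ^ 2 / sh (a * t) ^ 2 <= (a ^ 2 - 1) / 3.
Proof.
  intros Ha Ht.
  assert (H := kappa_mono t (a * t) Ht ltac:(nra)).
  assert (0 < sh t) by (apply sh_gt0; lra).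
  assert (0 < sh (a * t)) by (apply sh_gt0; nra).
  assert (E : (a * t) ^ 2 / sh (a * t) ^ 2 = t ^ 2 * (a ^ 2 / sh (a * t) ^ 2)) by (field; lra).
  rewrite E in H.
  assert (E2 : t ^ 2 / sh t ^ 2 = t ^ 2 * / sh t ^ 2) by (field; lra). rewrite E2 in H.
  assert (0 < t ^ 2) by nra.
  apply Rmult_le_reg_l with (t ^ 2); auto. nra.
Qed.

Lemma kfun_ge0 a u : 1 <= a -> 0 <= u -> a * u <= PI ->
  0 <= sin (a * u) * cos u - a * cos (a * u) * sin u.
Proof.
  intros Ha Hu Hau.
  apply (mono0 (fun v => sin (a * v) * cos v - a * cos (a * v) * sin v)
               (fun v => (a ^ 2 - 1) * sin (a * v) * sin v)); auto.
  - cbv beta. rewrite Rmult_0_r, sin_0. field.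
  - intros x Hx. auto_derive; auto. ring.
  - intros x Hx. assert (0 <= sin (a * x)) by (apply sin_ge_0; nra).
    assert (0 <= sin x) by (apply sin_ge_0; nra).
    apply Rmult_le_pos; [|auto]. apply Rmult_le_pos; nra.
Qed.

Lemma F6 a m p : 1 <= a -> 0 < m -> m <= p -> a * p <= PI -> p < PI ->
  sin (a * p) * sin m <= sin (a * m) * sin p.
Proof.
  intros Ha Hm Hmp Hap Hp.
  assert (Hs : forall u, 0 < u -> u <= p -> 0 < sin u).
  { intros u Hu Hup. apply sin_gt_0; lra. }
  assert (H : - (sin (a * m) / sin m) <= - (sin (a * p) / sin p)).
  { apply (mono (fun v => - (sin (a * v) / sin v))
      (fun v => (sin (a * v) * cos v - a * cos (a * v) * sin v) / sin v ^ 2)); auto.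
    - intros x Hx. assert (0 < sin x) by (apply Hs; lra). auto_derive. lra. field. lra.
    - intros x Hx. assert (0 < sin x) by (apply Hs; lra).
      apply Rmult_le_pos. apply kfun_ge0; nra. left; apply Rinv_0_lt_compat; nra. }
  assert (0 < sin m) by (apply Hs; lra). assert (0 < sin p) by (apply Hs; lra).
  assert (E1 : sin (a * m) * sin p = (sin (a * m) / sin m) * (sin m * sin p)) by (field; lra).
  assert (E2 : sin (a * p) * sin m = (sin (a * p) / sin p) * (sin m * sin p)) by (field; lra).
  rewrite E1, E2. apply Rmult_le_compat_r. nra. lra.
Qed.

Lemma cos_lb1 w : 0 <= w <= PI/2 -> 1 - w^2/2 <= cos w.
Proof.
  intros Hw. destruct (cos_bound w 1) as [H _]; try lra.
  unfold cos_approx, cos_term in H. simpl in H. 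
  assert (PI <= 4) by apply PI_4.
  assert (w^4/24 - w^6/720 >= 0).
  { assert (w^2 <= 4) by nra. assert (0 <= w^4) by nra. nra. }
  lra.
Qed.

Lemma cos_ub0 w : 0 <= w <= PI/2 -> cos w <= 1 - w^2/2 + w^4/24.
Proof.
  intros Hw. destruct (cos_bound w 0) as [_ H]; try lra.
  unfold cos_approx, cos_term in H. simpl in H. lra.
Qed.

Lemma PI_ub : PI < 3.2.
Proof.
  destruct (Rlt_or_le PI 3.2) as [H|H]; auto.
  assert (H1 : cos 1.6 <= 1 - 1.6^2/2 + 1.6^4/24) by (apply cos_ub0; lra).
  destruct (Req_dec (PI/2) 1.6) as [E|E].
  - assert (cos 1.6 = 0) by (rewrite <- E; apply cos_PI2). lra.
  - assert (0 < cos 1.6) by (apply cos_gt_0; lra). lra.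
Qed.

Lemma sin_lb1 v : 0 <= v <= PI -> v - v^3/6 <= sin v.
Proof.
  intros Hv. destruct (sin_bound v 1) as [H _]; try lra.
  unfold sin_approx, sin_term in H. simpl in H.
  assert (PI <= 4) by apply PI_4.
  assert (v^5/120 - v^7/5040 >= 0).
  { assert (v^2 <= 16) by nra. assert (0 <= v^5) by (apply pow_le; lra). nra. }
  lra.
Qed.

Lemma F8 v : 0 < v -> v <= PI / 2 -> 6 * v ^ 2 <= sin v ^ 2 * (PI ^ 2 + 2 * v ^ 2).
Proof.
  intros H0 H1. assert (HP := PI_ub). assert (HP3 : 3 < PI) by (assert (H := PI2_3_2); lra).
  destruct (Rle_or_lt v 1) as [Hv|Hv].
  - assert (Hs := sin_lb1 v ltac:(lra)).
    assert (0 <= v - v^3/6) by nra.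
    assert ((v - v^3/6)^2 <= sin v ^2) by nra.
    assert (5/6 <= 1 - v^2/6) by nra. assert (9 <= PI^2) by nra. assert (25/36 <= (1 - v^2/6)^2) by nra.
    assert (6 <= (1 - v^2/6)^2 * (PI^2 + 2 * v^2)) by nra.
    nra.
  - set (w := PI/2 - v).
    assert (Hc := cos_lb1 w ltac:(unfold w; lra)).
    assert (Esw : sin v = cos w) by (unfold w; rewrite cos_shift; auto). rewrite Esw.
    assert (Ev : v = PI/2 - w) by (unfold w; ring). rewrite Ev. clearbody w.
    assert (0 <= w <= 0.6) by lra.
    assert (0 < 1 - w^2/2) by nra.
    assert ((1 - w^2/2)^2 <= cos w ^2) by nra.
    assert (0 <= 3 * PI^2/2 - 2 * PI * w + 2 * w^2 <= 15.36) by nra.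
    assert (0 <= w - w^3/4 <= w) by nra.
    assert (0 <= 4 * PI - 4 * w - (w - w^3/4) * (3 * PI^2/2 - 2 * PI * w + 2 * w^2)) by nra.
    nra.
Qed.

Lemma sin_le_mono x y : 0 <= x -> x <= y -> y <= PI/2 -> sin x <= sin y.
Proof.
  intros. rewrite <- (cos_shift x), <- (cos_shift y). apply cos_le_mono; lra.
Qed.

Lemma sin2_diff p m : sin p ^ 2 - sin m ^ 2 = sin (p + m) * sin (p - m).
Proof.
  rewrite sin_plus, sin_minus.
  assert (H1 := sin2_cos2 p). assert (H2 := sin2_cos2 m). unfold Rsqr in *. nra.
Qed.

Lemma core_L0 a t m p : 1 <= a -> 0 <= t -> 0 <= m -> m < p -> a * (p + m) <= PI -> p + m < PI ->
  (sh t ^ 2 + sin m ^ 2) * (sh (a * t) ^ 2 + sin (a * p) ^ 2)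
  <= (sh (a * t) ^ 2 + sin (a * m) ^ 2) * (sh t ^ 2 + sin p ^ 2).
Proof.
  intros Ha Ht Hm Hmp Hap Hpp.
  set (x := sh t ^ 2). set (X := sh (a * t) ^ 2).
  assert (HX : a ^ 2 * x <= X).
  { unfold x, X. assert (H := F2 a t Ha Ht). assert (0 <= sh t) by (apply sh_ge0; lra).
    replace (a^2 * sh t^2) with ((a * sh t)^2) by ring. apply pow_incr. split; nra. }
  assert (Hx : 0 <= x) by (unfold x; nra).
  assert (E1 := sin2_diff p m). assert (E2 := sin2_diff (a * p) (a * m)).
  replace (a * p + a * m) with (a * (p + m)) in E2 by ring.
  replace (a * p - a * m) with (a * (p - m)) in E2 by ring.
  assert (Sa : 0 <= sin (p + m)) by (apply sin_ge_0; lra).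
  assert (Sb : 0 <= sin (p - m)) by (apply sin_ge_0; lra).
  assert (SAa : 0 <= sin (a * (p + m))) by (apply sin_ge_0; nra).
  assert (SAb : 0 <= sin (a * (p - m))) by (apply sin_ge_0; nra).
  assert (F1a : sin (a * (p + m)) <= a * sin (p + m)) by (apply F1; lra).
  assert (F1b : sin (a * (p - m)) <= a * sin (p - m)) by (apply F1; nra).
  assert (P1 : sin (a * (p + m)) * sin (a * (p - m)) <= a ^ 2 * (sin (p + m) * sin (p - m))).
  { assert (sin (a * (p + m)) * sin (a * (p - m)) <= a * sin (p + m) * sin (a * (p - m))).
    { apply Rmult_le_compat_r; auto. }
    assert (a * sin (p + m) * sin (a * (p - m)) <= a * sin (p + m) * (a * sin (p - m))).
    { apply Rmult_le_compat_l; auto. nra. }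
    nra. }
  assert (Cst : sin (a * p) ^ 2 * sin m ^ 2 <= sin (a * m) ^ 2 * sin p ^ 2).
  { destruct (Req_dec m 0) as [Z|Z].
    - subst m. rewrite sin_0. nra.
    - assert (H := F6 a m p Ha ltac:(lra) ltac:(lra) ltac:(nra) ltac:(lra)).
      assert (0 <= sin m) by (apply sin_ge_0; lra).
      assert (0 <= sin (a * p)) by (apply sin_ge_0; nra).
      assert (0 <= sin (a * p) * sin m) by nra.
      replace (sin (a * p) ^ 2 * sin m ^ 2) with ((sin (a * p) * sin m)^2) by ring.
      replace (sin (a * m) ^ 2 * sin p ^ 2) with ((sin (a * m) * sin p)^2) by ring.
      apply pow_incr; lra. }
  assert (K : 0 <= X * (sin p ^ 2 - sin m ^ 2) - x * (sin (a * p) ^ 2 - sin (a * m) ^ 2)).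
  { rewrite E1, E2.
    assert (0 <= sin (p + m) * sin (p - m)) by nra.
    nra. }
  nra.
Qed.

Lemma sh_sq_mono a t : 1 <= a -> 0 <= t -> a ^ 2 * sh t ^ 2 <= sh (a * t) ^ 2.
Proof.
  intros H1 H2. assert (H := F2 a t H1 H2). assert (0 <= sh t) by (apply sh_ge0; lra).
  replace (a^2 * sh t^2) with ((a * sh t)^2) by ring. apply pow_incr. split; nra.
Qed.

Lemma F4 th p : 0 < th < PI -> 0 <= p -> p <= th / 2 ->
  sin p <= sin (th / 2) * sin (PI / th * p).
Proof.
  intros Hth Hp Hp2. set (a := PI / th).
  assert (Ha : 1 <= a). { unfold a. apply (Rmult_le_reg_r th). lra. field_simplify; lra. }
  destruct (Req_dec p 0) as [Z|Z].
  - subst p. rewrite Rmult_0_r, sin_0. lra.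
  - assert (H := F6 a p (th / 2) Ha ltac:(lra) Hp2 ltac:(unfold a; field_simplify; lra) ltac:(lra)).
    replace (a * (th / 2)) with (PI / 2) in H by (unfold a; field; lra).
    rewrite sin_PI2 in H. lra.
Qed.

Lemma U3 th t : 0 < th < PI -> 0 <= t ->
  sh (PI / th * t) ^ 2 * (sh t ^ 2 + sin (th / 2) ^ 2)
  <= (PI / th) ^ 2 * sin (th / 2) ^ 2 * sh t ^ 2 * (sh (PI / th * t) ^ 2 + 1).
Proof.
  intros Hth Ht. set (a := PI / th). set (s := sin (th / 2)).
  assert (Ha : 1 <= a). { unfold a. apply (Rmult_le_reg_r th). lra. field_simplify; lra. }
  destruct (Req_dec t 0) as [Z|Z].
  - subst t. rewrite Rmult_0_r, sh0. nra.
  - assert (Hx : 0 < sh t) by (apply sh_gt0; lra).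
    assert (HX : 0 < sh (a * t)) by (apply sh_gt0; nra).
    assert (H7 := F7 a t Ha ltac:(lra)).
    assert (H8 := F8 (th / 2) ltac:(lra) ltac:(lra)). fold s in H8.
    assert (EP : PI = 2 * a * (th / 2)) by (unfold a; field; lra).
    rewrite EP in H8.
    assert (Hv : 0 < (th / 2) ^ 2) by nra.
    assert (H9 : 3 <= s ^ 2 * (2 * a ^ 2 + 1)).
    { apply (Rmult_le_reg_r (2 * (th/2)^2)). lra. nra. }
    set (x := sh t ^ 2) in *. set (X := sh (a * t) ^ 2) in *.
    assert (0 < x) by (unfold x; nra). assert (0 < X) by (unfold X; nra).
    assert (E : / x - a ^ 2 / X = (X - a ^ 2 * x) / (x * X)) by (field; lra).
    rewrite E in H7.
    assert (H10 : X - a ^ 2 * x <= (a ^ 2 - 1) / 3 * (x * X)).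
    { apply (Rmult_le_reg_r (/ (x * X))). apply Rinv_0_lt_compat; nra.
      replace ((a ^ 2 - 1) / 3 * (x * X) * / (x * X)) with ((a ^ 2 - 1) / 3) by (field; lra).
      exact H7. }
    assert (0 <= s ^ 2) by nra.
    assert (H11 : s ^ 2 * (X - a ^ 2 * x) <= s ^ 2 * ((a ^ 2 - 1) / 3 * (x * X))).
    { apply Rmult_le_compat_l; auto. }
    assert (s ^ 2 * (a ^ 2 - 1) / 3 <= a ^ 2 * s ^ 2 - 1) by nra.
    assert (0 <= x * X) by nra.
    nra.
Qed.

Lemma U2 th t p : 0 < th < PI -> 0 <= t -> 0 <= p -> p <= th / 2 ->
  (sh (PI / th * t) ^ 2 + 1) * (sh t ^ 2 + sin p ^ 2)
  <= (sh (PI / th * t) ^ 2 + sin (PI / th * p) ^ 2) * (sh t ^ 2 + sin (th / 2) ^ 2).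
Proof.
  intros Hth Ht Hp Hp2. assert (HPI := PI_RGT_0). set (a := PI / th). set (s := sin (th / 2)).
  assert (Ha : 1 <= a). { unfold a. apply (Rmult_le_reg_r th). lra. field_simplify; lra. }
  assert (HX := sh_sq_mono a t Ha Ht).
  set (x := sh t ^ 2) in *. set (X := sh (a * t) ^ 2) in *.
  assert (0 <= x) by (unfold x; nra).
  assert (H4 := F4 th p Hth Hp Hp2). fold a s in H4.
  assert (0 <= sin p) by (apply sin_ge_0; lra).
  assert (i : sin p ^ 2 <= s ^ 2 * sin (a * p) ^ 2).
  { replace (s ^ 2 * sin (a * p) ^ 2) with ((s * sin (a * p)) ^ 2) by ring. apply pow_incr; lra. }
  assert (ii : sin p ^ 2 <= s ^ 2).
  { assert (sin p <= s) by (apply sin_le_mono; lra). apply pow_incr; lra. }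
  set (d := th / 2 - p). set (g := th / 2 + p).
  assert (E1 : s ^ 2 - sin p ^ 2 = sin g * sin d) by (unfold s, g, d; apply sin2_diff).
  assert (E2 : cos (a * p) = sin (a * d)).
  { unfold d. replace (a * (th / 2 - p)) with (PI / 2 - a * p) by (unfold a; field; lra).
    rewrite sin_shift; auto. }
  assert (Hd : 0 <= d) by (unfold d; lra).
  assert (Had : a * d <= PI / 2) by (unfold d; replace (a * (th / 2 - p)) with (PI / 2 - a * p) by (unfold a; field; lra); nra).
  assert (F1d : sin (a * d) <= a * sin d) by (apply F1; lra).
  assert (S1 : 0 <= sin (a * d)) by (apply sin_ge_0; nra).
  assert (S2 : 0 <= sin d) by (apply sin_ge_0; unfold d; lra).
  assert (Sdg : sin d <= sin g).
  { destruct (Rle_or_lt g (PI / 2)).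
    - apply sin_le_mono; unfold d, g in *; lra.
    - rewrite <- (sin_PI_x g). apply sin_le_mono; unfold d, g in *; lra. }
  assert (iii : cos (a * p) ^ 2 <= a ^ 2 * (s ^ 2 - sin p ^ 2)).
  { rewrite E1, E2. assert (sin (a * d) ^ 2 <= (a * sin d) ^ 2) by (apply pow_incr; lra).
    assert (a ^ 2 * sin d ^ 2 <= a ^ 2 * (sin g * sin d)) by (apply Rmult_le_compat_l; nra).
    nra. }
  assert (Pyth : cos (a * p) ^ 2 = 1 - sin (a * p) ^ 2).
  { assert (Hsc := sin2_cos2 (a * p)). unfold Rsqr in Hsc. nra. }
  rewrite Pyth in iii.
  assert (X * (s ^ 2 - sin p ^ 2) >= a ^ 2 * x * (s ^ 2 - sin p ^ 2)) by nra.
  assert (a ^ 2 * x * (s ^ 2 - sin p ^ 2) >= x * (1 - sin (a * p) ^ 2)) by nra.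
  nra.
Qed.

Lemma core_U0 th t m p : 0 < th < PI -> 0 <= t -> 0 <= m -> m <= p -> p <= th / 2 ->
  (sh (PI / th * t) ^ 2 + sin (PI / th * m) ^ 2) * (sh t ^ 2 + sin p ^ 2)
  <= (PI / th * sin (th / 2)) ^ 2 * (sh t ^ 2 + sin m ^ 2) * (sh (PI / th * t) ^ 2 + sin (PI / th * p) ^ 2).
Proof.
  intros Hth Ht Hm Hmp Hp2. assert (HPI := PI_RGT_0).
  assert (HU2 := U2 th t p Hth Ht ltac:(lra) Hp2).
  assert (HU3 := U3 th t Hth Ht).
  set (a := PI / th) in *. set (s := sin (th / 2)) in *.
  assert (Ha : 1 <= a). { unfold a. apply (Rmult_le_reg_r th). lra. field_simplify; lra. }
  assert (Hap : a * p <= PI / 2) by (unfold a; apply (Rmult_le_reg_r th); [lra|]; field_simplify; nra).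
  assert (F1m : sin (a * m) <= a * sin m) by (apply F1; nra).
  assert (0 <= sin (a * m)) by (apply sin_ge_0; nra).
  assert (0 <= sin m) by (apply sin_ge_0; nra).
  assert (U1a : sin (a * m) ^ 2 <= a ^ 2 * sin m ^ 2).
  { replace (a ^ 2 * sin m ^ 2) with ((a * sin m) ^ 2) by ring. apply pow_incr; lra. }
  assert (HX := sh_sq_mono a t Ha Ht).
  assert (H4 := F4 th p Hth ltac:(lra) Hp2). fold a s in H4.
  assert (0 <= sin p) by (apply sin_ge_0; lra).
  assert (0 <= sin (a * p)) by (apply sin_ge_0; nra).
  destruct (Req_dec t 0) as [Z|Z].
  - subst t. rewrite Rmult_0_r, sh0 in *.
    assert (sin (a * m) * sin p <= a * sin m * (s * sin (a * p))).
    { apply Rmult_le_compat; auto. }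
    assert ((sin (a * m) * sin p) ^ 2 <= (a * sin m * (s * sin (a * p))) ^ 2).
    { apply pow_incr. split; [nra | auto]. }
    nra.
  - assert (Hx : 0 < sh t) by (apply sh_gt0; lra).
    set (x := sh t ^ 2) in *. set (X := sh (a * t) ^ 2) in *.
    assert (0 < x) by (unfold x; nra). assert (1 <= a ^ 2) by nra. assert (0 < X) by nra.
    assert (U1 : x * sin (a * m) ^ 2 <= X * sin m ^ 2) by nra.
    set (L := (X + sin (a * m) ^ 2) * (x + sin p ^ 2)).
    set (Rr := (a * s) ^ 2 * (x + sin m ^ 2) * (X + sin (a * p) ^ 2)).
    assert (S1 : x * L <= X * (x + sin m ^ 2) * (x + sin p ^ 2)).
    { unfold L. assert (0 <= x + sin p ^ 2) by nra. nra. }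
    assert (S2 : (X + 1) * (X * (x + sin m ^ 2) * (x + sin p ^ 2))
                 <= X * (x + sin m ^ 2) * ((X + sin (a * p) ^ 2) * (x + s ^ 2))).
    { assert (0 <= X * (x + sin m ^ 2)) by nra.
      replace ((X + 1) * (X * (x + sin m ^ 2) * (x + sin p ^ 2))) with
              ((X * (x + sin m ^ 2)) * ((X + 1) * (x + sin p ^ 2))) by ring.
      apply Rmult_le_compat_l; auto. }
    assert (S3 : X * (x + sin m ^ 2) * ((X + sin (a * p) ^ 2) * (x + s ^ 2))
                 <= (x + sin m ^ 2) * (X + sin (a * p) ^ 2) * (a ^ 2 * s ^ 2 * x * (X + 1))).
    { assert (0 <= (x + sin m ^ 2) * (X + sin (a * p) ^ 2)) by nra.
      replace (X * (x + sin m ^ 2) * ((X + sin (a * p) ^ 2) * (x + s ^ 2))) with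
              (((x + sin m ^ 2) * (X + sin (a * p) ^ 2)) * (X * (x + s ^ 2))) by ring.
      apply Rmult_le_compat_l; auto. }
    assert (S4 : (X + 1) * (x * L) <= (X + 1) * (x * Rr)).
    { assert ((X + 1) * (x * L) <= (X + 1) * (X * (x + sin m ^ 2) * (x + sin p ^ 2))).
      { apply Rmult_le_compat_l; nra. }
      unfold Rr. nra. }
    assert (0 < (X + 1) * x) by nra.
    apply (Rmult_le_reg_l ((X + 1) * x)); auto.
    eapply Rle_trans; [|eapply Rle_trans; [exact S4|]]; unfold L, Rr; right; ring.
Qed.

Lemma Cmod2 (z : C) : Cmod z ^ 2 = fst z ^ 2 + snd z ^ 2.
Proof. unfold Cmod. rewrite pow2_sqrt; auto. nra. Qed.

Lemma Cmod_sq_le (z w : C) : Cmod z ^ 2 <= Cmod w ^ 2 -> Cmod z <= Cmod w.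
Proof.
  intros H. assert (0 <= Cmod z) by apply Cmod_ge_0. assert (0 <= Cmod w) by apply Cmod_ge_0. nra.
Qed.

Lemma Cmod_sq_eq_scal (z w : C) k : 0 <= k -> Cmod z ^ 2 = k ^ 2 * Cmod w ^ 2 -> Cmod z = k * Cmod w.
Proof.
  intros Hk H. assert (0 <= Cmod z) by apply Cmod_ge_0. assert (0 <= Cmod w) by apply Cmod_ge_0.
  assert (0 <= k * Cmod w) by nra.
  replace (k ^ 2 * Cmod w ^ 2) with ((k * Cmod w) ^ 2) in H by ring.
  destruct (Rtotal_order (Cmod z) (k * Cmod w)) as [L|[E|L]]; auto.
  - assert (Cmod z ^ 2 < (k * Cmod w) ^ 2) by nra. lra.
  - assert ((k * Cmod w) ^ 2 < Cmod z ^ 2) by nra. lra.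
Qed.

Lemma polar (w : C) : w <> 0%C -> 0 <= snd w ->
  fst w = Cmod w * cos (Carg w) /\ snd w = Cmod w * sin (Carg w) /\ 0 <= Carg w <= PI /\ 0 < Cmod w.
Proof.
  intros Hw H2.
  assert (Hm : 0 < Cmod w).
  { destruct (Cmod_ge_0 w) as [|E]; auto. symmetry in E. apply Cmod_eq_0 in E. contradiction. }
  assert (Hm2 := Cmod2 w).
  set (c := fst w / Cmod w).
  assert (Hc : -1 <= c <= 1).
  { assert (fst w ^ 2 <= Cmod w ^ 2) by nra. assert (-Cmod w <= fst w <= Cmod w) by nra.
    assert (Hi : Cmod w * / Cmod w = 1) by (field; lra).
    assert (0 < / Cmod w) by (apply Rinv_0_lt_compat; auto).
    unfold c, Rdiv. split; nra. }
  unfold Carg. destruct (Rle_dec 0 (Im w)) as [_|N]; [|unfold Im in N; lra].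
  fold c. unfold Re. fold c.
  rewrite cos_acos by auto. rewrite sin_acos by auto.
  repeat split.
  - unfold c. field. lra.
  - assert (E : 1 - c² = (snd w / Cmod w) ^ 2).
    { unfold Rsqr. replace (1 - c * c) with ((Cmod w ^ 2 - fst w ^ 2) / Cmod w ^ 2) by (unfold c; field; lra). replace (Cmod w ^ 2 - fst w ^ 2) with (snd w ^ 2) by lra. field. lra. }
    rewrite E. rewrite sqrt_pow2. field. lra.
    apply Rmult_le_pos; auto. left. apply Rinv_0_lt_compat. auto.
  - apply acos_bound.
  - apply acos_bound.
  - auto.
Qed.

Lemma sector_iff th w : 0 < th < PI ->
  (sector th w <-> 0 < snd w /\ 0 < fst w * sin th - snd w * cos th).
Proof.
  intros Hth. split.
  - intros [Hw [H1 H2]].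
    assert (Hs : 0 <= snd w).
    { destruct (Rle_dec 0 (snd w)) as [|N]; auto. exfalso.
      unfold Carg in H1. destruct (Rle_dec 0 (Im w)) as [X|_]. unfold Im in X; lra.
      assert (H := acos_bound (Re w / Cmod w)). lra. }
    destruct (polar w Hw Hs) as [E1 [E2 [_ Hr]]].
    set (al := Carg w) in *.
    assert (0 < sin al) by (apply sin_gt_0; lra).
    assert (0 < sin (th - al)) by (apply sin_gt_0; lra).
    rewrite sin_minus in *. rewrite E1, E2. split; nra.
  - intros [H1 H2].
    assert (Hw : w <> 0%C). { intros E. rewrite E in H1. simpl in H1. lra. }
    destruct (polar w Hw ltac:(lra)) as [E1 [E2 [Hb Hr]]].
    set (al := Carg w) in *.
    assert (Hsa : 0 < sin al) by nra.
    assert (Hst : 0 < sin (th - al)).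
    { rewrite sin_minus. rewrite E1, E2 in H2. nra. }
    split; auto.
    split.
    + destruct (Rle_lt_or_eq_dec 0 al (proj1 Hb)) as [|Z]; auto. rewrite <- Z, sin_0 in Hsa; lra.
    + destruct (Rlt_or_le al th) as [|L]; auto. exfalso.
      assert (0 <= sin (al - th)) by (apply sin_ge_0; lra).
      replace (th - al) with (- (al - th)) in Hst by ring. rewrite sin_neg in Hst. lra.
Qed.

Lemma glb_bounds (E : R -> Prop) (m t0 : R) : E t0 -> (forall t, E t -> m <= t) ->
  m <= real (Glb_Rbar E) <= t0.
Proof.
  intros H0 Hm. destruct (Glb_Rbar_correct E) as [Hlb Hg].
  assert (H1 := Hlb t0 H0).
  assert (H2 : Rbar_le m (Glb_Rbar E)). { apply Hg. intros t Ht. simpl. apply Hm; auto. }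
  destruct (Glb_Rbar E) as [g| |]; simpl in *; try tauto.
Qed.

Lemma th_half_ln q : 0 < q -> th (ln q / 2) = (q - 1) / (q + 1).
Proof.
  intros Hq. unfold th.
  assert (He : exp (ln q / 2) * exp (ln q / 2) = q).
  { rewrite <- exp_plus. replace (ln q / 2 + ln q / 2) with (ln q) by field. apply exp_ln; auto. }
  rewrite exp_Ropp. assert (0 < exp (ln q / 2)) by apply exp_pos.
  set (e := exp (ln q / 2)) in *. rewrite <- He. field. split; nra.
Qed.

Lemma th_rho (u v : C) : 0 < snd u -> 0 < snd v ->
  th (rho_H u v / 2) = Cmod (u - v) / Cmod (u - Cconj v).
Proof.
  intros Hu Hv. unfold rho_H.
  set (A := Cmod (u - Cconj v)). set (B := Cmod (u - v)).
  assert (HA2 : A ^ 2 = (fst u - fst v) ^ 2 + (snd u + snd v) ^ 2).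
  { unfold A. rewrite Cmod2. simpl. ring. }
  assert (HB2 : B ^ 2 = (fst u - fst v) ^ 2 + (snd u - snd v) ^ 2).
  { unfold B. rewrite Cmod2. simpl. ring. }
  assert (0 <= A) by apply Cmod_ge_0. assert (0 <= B) by apply Cmod_ge_0.
  assert (HAB : B < A) by nra.
  rewrite th_half_ln.
  - field. split; lra.
  - apply Rdiv_lt_0_compat; lra.
Qed.

Lemma Cmod_diff2 (w z : C) : Cmod (w - z) ^ 2 = (fst w - fst z) ^ 2 + (snd w - snd z) ^ 2.
Proof. rewrite Cmod2. simpl. ring. Qed.

Lemma Cmod_lt_sq (z : C) e : 0 < e -> Cmod z ^ 2 < e ^ 2 -> Cmod z < e.
Proof. intros. assert (0 <= Cmod z) by apply Cmod_ge_0. nra. Qed.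

Lemma half_angle th : sin (th / 2) = sin th * cos (th / 2) - cos th * sin (th / 2).
Proof. rewrite <- sin_minus. f_equal. field. Qed.

Lemma boundary_of th (z : C) : 0 < th < PI ->
  (forall d, 0 < d -> sector th (fst z + d * cos (th / 2), snd z + d * sin (th / 2))) ->
  (exists v : C, fst v ^ 2 + snd v ^ 2 = 1 /\ forall d, 0 < d -> ~ sector th (fst z + d * fst v, snd z + d * snd v)) ->
  boundary (sector th) z.
Proof.
  intros Hth Hin [v [Hv Hout]] eps Heps.
  assert (Hc := sin2_cos2 (th / 2)). unfold Rsqr in Hc.
  split.
  - exists (fst z + eps / 2 * cos (th / 2), snd z + eps / 2 * sin (th / 2)). split.
    + apply Hin. lra.
    + apply Cmod_lt_sq; auto. rewrite Cmod_diff2. simpl. nra.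
  - exists (fst z + eps / 2 * fst v, snd z + eps / 2 * snd v). split.
    + apply Hout. lra.
    + apply Cmod_lt_sq; auto. rewrite Cmod_diff2. simpl. nra.
Qed.

Lemma bd_ray0 th t : 0 < th < PI -> 0 <= t -> boundary (sector th) (t, 0).
Proof.
  intros Hth Ht. apply boundary_of; auto.
  - intros d Hd. apply sector_iff; auto. simpl.
    assert (0 < sin (th / 2)) by (apply sin_gt_0; lra).
    assert (0 < sin th) by (apply sin_gt_0; lra).
    assert (Hh := half_angle th). split. nra. nra.
  - exists (0, -1). simpl. split. ring. intros d Hd Hs. apply sector_iff in Hs; auto. simpl in Hs. lra.
Qed.

Lemma bd_rayth th t : 0 < th < PI -> 0 <= t -> boundary (sector th) (t * cos th, t * sin th).
Proof.
  intros Hth Ht. apply boundary_of; auto.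
  - intros d Hd. apply sector_iff; auto. simpl.
    assert (0 < sin (th / 2)) by (apply sin_gt_0; lra).
    assert (0 < sin th) by (apply sin_gt_0; lra).
    assert (Hh := half_angle th). split. nra. nra.
  - exists (- sin th, cos th). simpl. split.
    + assert (Hc := sin2_cos2 th). unfold Rsqr in Hc. nra.
    + intros d Hd Hs. apply sector_iff in Hs; auto. simpl in Hs.
      assert (Hc := sin2_cos2 th). unfold Rsqr in Hc. nra.
Qed.

Lemma Cmod_tri3 (a b c : C) : Cmod (a - c) <= Cmod (a - b) + Cmod (b - c).
Proof.
  replace (a - c)%C with ((a - b) + (b - c))%C. apply Cmod_triangle.
  destruct a, b, c. unfold Cminus, Cplus, Copp. simpl. f_equal; ring.
Qed.

Lemma Cmod_sym (a b : C) : Cmod (a - b) = Cmod (b - a).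
Proof.
  apply Rle_antisym; apply Cmod_sq_le; rewrite !Cmod_diff2; nra.
Qed.

Definition Nf th (w : C) := fst w * sin th - snd w * cos th.
Definition refl th (y : C) : C := (fst y - 2 * Nf th y * sin th, snd y + 2 * Nf th y * cos th).

Lemma refl_dist th (w y : C) :
  Cmod (w - refl th y) ^ 2 = Cmod (w - y) ^ 2 + 4 * Nf th w * Nf th y.
Proof.
  rewrite !Cmod_diff2. unfold refl, Nf. simpl.
  assert (Hc := sin2_cos2 th). unfold Rsqr in Hc.
  set (s := sin th) in *. set (c := cos th) in *.
  match goal with |- ?L = ?R => assert (E : L - R = 4 * (fst y * s - snd y * c) ^ 2 * (s * s + c * c - 1)) by ring end.
  replace (s * s + c * c - 1) with 0 in E by lra. lra.
Qed.

Lemma conj_dist (w y : C) :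
  Cmod (w - Cconj y) ^ 2 = Cmod (w - y) ^ 2 + 4 * snd w * snd y.
Proof. rewrite !Cmod_diff2. simpl. ring. Qed.

Lemma out_bound th (x y w : C) : 0 < th < PI -> sector th x -> sector th y -> ~ sector th w ->
  Rmin (Cmod (x - Cconj y)) (Cmod (x - refl th y)) <= Cmod (x - w) + Cmod (w - y).
Proof.
  intros Hth Hx Hy Hw.
  apply sector_iff in Hx; auto. apply sector_iff in Hy; auto.
  rewrite sector_iff in Hw; auto.
  destruct (Rle_or_lt (snd w) 0) as [H2|H2].
  - apply Rle_trans with (Cmod (x - Cconj y)). apply Rmin_l.
    apply Rle_trans with (Cmod (x - w) + Cmod (w - Cconj y)). apply Cmod_tri3.
    apply Rplus_le_compat_l. apply Cmod_sq_le. rewrite conj_dist. nra.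
  - assert (HN : Nf th w <= 0).
    { unfold Nf. destruct (Rle_or_lt (fst w * sin th - snd w * cos th) 0); auto. exfalso. apply Hw. split; auto. }
    apply Rle_trans with (Cmod (x - refl th y)). apply Rmin_r.
    apply Rle_trans with (Cmod (x - w) + Cmod (w - refl th y)). apply Cmod_tri3.
    apply Rplus_le_compat_l. apply Cmod_sq_le. rewrite refl_dist.
    assert (0 < Nf th y) by (unfold Nf; lra). nra.
Qed.

Lemma bd_bound th (x y z : C) : 0 < th < PI -> sector th x -> sector th y -> boundary (sector th) z ->
  Rmin (Cmod (x - Cconj y)) (Cmod (x - refl th y)) <= Cmod (x - z) + Cmod (z - y).
Proof.
  intros Hth Hx Hy Hz.
  set (m0 := Rmin (Cmod (x - Cconj y)) (Cmod (x - refl th y))).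
  destruct (Rle_or_lt m0 (Cmod (x - z) + Cmod (z - y))) as [|L]; auto. exfalso.
  destruct (Hz ((m0 - (Cmod (x - z) + Cmod (z - y))) / 2) ltac:(lra)) as [_ [w [Hw Hd]]].
  assert (H := out_bound th x y w Hth Hx Hy Hw). fold m0 in H.
  assert (H1 := Cmod_tri3 x z w). assert (H2 := Cmod_tri3 w z y).
  rewrite (Cmod_sym z w) in H1. lra.
Qed.

Definition Df th (w : C) := fst w * cos th + snd w * sin th.

Lemma rot_dist th (p q : C) : Cmod (p - q) ^ 2 = (Df th p - Df th q) ^ 2 + (Nf th p - Nf th q) ^ 2.
Proof.
  rewrite Cmod_diff2. unfold Df, Nf.
  assert (Hc := sin2_cos2 th). unfold Rsqr in Hc.
  set (s := sin th) in *. set (c := cos th) in *.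
  match goal with |- ?L = ?R => assert (E : R - L = ((fst p - fst q) ^ 2 + (snd p - snd q) ^ 2) * (s * s + c * c - 1)) by ring end.
  replace (s * s + c * c - 1) with 0 in E by lra. lra.
Qed.

Lemma seg_conj th (x y : C) : 0 < th < PI -> sector th x -> sector th y ->
  0 <= fst x * snd y + fst y * snd x ->
  exists z, boundary (sector th) z /\ Cmod (x - z) + Cmod (z - y) = Cmod (x - Cconj y).
Proof.
  intros Hth Hx Hy Ht.
  apply sector_iff in Hx; auto. apply sector_iff in Hy; auto.
  destruct x as [x1 x2]. destruct y as [y1 y2]. simpl in *.
  set (t := (x1 * y2 + y1 * x2) / (x2 + y2)).
  set (l := x2 / (x2 + y2)).
  exists (t, 0). split.
  - apply bd_ray0; auto. unfold t. apply Rdiv_le_0_compat; lra.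
  - assert (E1 : Cmod ((x1, x2) - (t, 0)) = l * Cmod ((x1, x2) - Cconj (y1, y2))).
    { apply Cmod_sq_eq_scal. unfold l. apply Rdiv_le_0_compat; lra.
      rewrite !Cmod_diff2. simpl. unfold l, t. field. lra. }
    assert (E2 : Cmod ((t, 0) - (y1, y2)) = (1 - l) * Cmod ((x1, x2) - Cconj (y1, y2))).
    { apply Cmod_sq_eq_scal. unfold l. replace (1 - x2 / (x2 + y2)) with (y2 / (x2 + y2)) by (field; lra).
      apply Rdiv_le_0_compat; lra.
      rewrite !Cmod_diff2. simpl. unfold l, t. field. lra. }
    rewrite E1, E2. ring.
Qed.

Lemma seg_refl th (x y : C) : 0 < th < PI -> sector th x -> sector th y ->
  0 <= Df th x * Nf th y + Df th y * Nf th x ->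
  exists z, boundary (sector th) z /\ Cmod (x - z) + Cmod (z - y) = Cmod (x - refl th y).
Proof.
  intros Hth Hx Hy Ht.
  assert (Nx : 0 < Nf th x) by (apply sector_iff in Hx; auto; unfold Nf; lra).
  assert (Ny : 0 < Nf th y) by (apply sector_iff in Hy; auto; unfold Nf; lra).
  assert (Hc := sin2_cos2 th). unfold Rsqr in Hc.
  set (t := (Df th x * Nf th y + Df th y * Nf th x) / (Nf th x + Nf th y)).
  set (l := Nf th x / (Nf th x + Nf th y)).
  set (z := (t * cos th, t * sin th)).
  assert (Dz : Df th z = t).
  { unfold Df, z; simpl. replace (t * cos th * cos th + t * sin th * sin th) with (t * (sin th * sin th + cos th * cos th)) by ring. rewrite Hc. ring. }
  assert (Nz : Nf th z = 0) by (unfold Nf, z; simpl; ring).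
  assert (Dy' : Df th (refl th y) = Df th y).
  { unfold Df, refl. simpl. ring. }
  assert (Ny' : Nf th (refl th y) = - Nf th y).
  { unfold Nf at 1, refl. simpl. set (n := Nf th y). 
    replace ((fst y - 2 * n * sin th) * sin th - (snd y + 2 * n * cos th) * cos th)
      with ((fst y * sin th - snd y * cos th) - 2 * n * (sin th * sin th + cos th * cos th)) by ring.
    rewrite Hc. unfold n, Nf. ring. }
  exists z. split.
  - apply bd_rayth; auto. unfold t. apply Rdiv_le_0_compat; lra.
  - assert (E1 : Cmod (x - z) = l * Cmod (x - refl th y)).
    { apply Cmod_sq_eq_scal. unfold l. apply Rdiv_le_0_compat; lra.
      rewrite !(rot_dist th). rewrite Dz, Nz, Dy', Ny'. unfold l, t. field. lra. }
    assert (E2 : Cmod (z - y) = (1 - l) * Cmod (x - refl th y)).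
    { replace (Cmod (z - y)) with (Cmod (z - refl th y)).
      2: { replace (Cmod (z - y)) with (1 * Cmod (z - y)) by ring. apply Cmod_sq_eq_scal. lra.
           rewrite refl_dist, Nz. ring. }
      apply Cmod_sq_eq_scal. unfold l. replace (1 - Nf th x / (Nf th x + Nf th y)) with (Nf th y / (Nf th x + Nf th y)) by (field; lra).
      apply Rdiv_le_0_compat; lra.
      rewrite !(rot_dist th). rewrite Dz, Nz, Dy', Ny'. unfold l, t. field. lra. }
    rewrite E1, E2. ring.
Qed.

Lemma sh_sq_abs t : sh t ^ 2 = sh (Rabs t) ^ 2.
Proof. unfold Rabs. destruct (Rcase_abs t); auto. rewrite sh_opp. ring. Qed.

Lemma sin_sq_abs m : sin m ^ 2 = sin (Rabs m) ^ 2.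
Proof. unfold Rabs. destruct (Rcase_abs m); auto. rewrite sin_neg. ring. Qed.

Lemma core_L a t m p : 1 <= a -> Rabs m < p -> a * (p + Rabs m) <= PI -> p + Rabs m < PI ->
  (sh t ^ 2 + sin m ^ 2) * (sh (a * t) ^ 2 + sin (a * p) ^ 2)
  <= (sh (a * t) ^ 2 + sin (a * m) ^ 2) * (sh t ^ 2 + sin p ^ 2).
Proof.
  intros Ha H1 H2 H3.
  rewrite (sh_sq_abs t), (sh_sq_abs (a * t)), (sin_sq_abs m), (sin_sq_abs (a * m)).
  rewrite !Rabs_mult, (Rabs_pos_eq a) by lra.
  apply core_L0; auto. apply Rabs_pos. apply Rabs_pos.
Qed.

Lemma core_U th t m p : 0 < th < PI -> Rabs m <= p -> p <= th / 2 ->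
  (sh (PI / th * t) ^ 2 + sin (PI / th * m) ^ 2) * (sh t ^ 2 + sin p ^ 2)
  <= (PI / th * sin (th / 2)) ^ 2 * (sh t ^ 2 + sin m ^ 2) * (sh (PI / th * t) ^ 2 + sin (PI / th * p) ^ 2).
Proof.
  intros Hth H1 H2.
  assert (Ha : 0 <= PI / th) by (apply Rdiv_le_0_compat; lra).
  rewrite (sh_sq_abs t), (sh_sq_abs (PI / th * t)), (sin_sq_abs m), (sin_sq_abs (PI / th * m)).
  rewrite !Rabs_mult, (Rabs_pos_eq (PI / th)) by lra.
  apply core_U0; auto. apply Rabs_pos. apply Rabs_pos.
Qed.

Lemma ratio_le P Q U V : 0 <= P -> 0 < Q -> 0 <= U -> 0 < V -> P ^ 2 * V ^ 2 <= U ^ 2 * Q ^ 2 -> P / Q <= U / V.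
Proof.
  intros HP HQ HU HV H.
  assert (P * V <= U * Q).
  { destruct (Rle_or_lt (P * V) (U * Q)) as [|L]; auto.
    assert (0 <= U * Q) by nra. assert ((U * Q) ^ 2 < (P * V) ^ 2) by nra. nra. }
  apply (Rmult_le_reg_r (Q * V)). nra.
  replace (P / Q * (Q * V)) with (P * V) by (field; lra).
  replace (U / V * (Q * V)) with (U * Q) by (field; lra). auto.
Qed.

Lemma dist_polar r R al be : 0 < r -> 0 < R ->
  (r * cos al - R * cos be) ^ 2 + (r * sin al - R * sin be) ^ 2
  = 4 * r * R * (sh ((ln r - ln R) / 2) ^ 2 + sin ((al - be) / 2) ^ 2).
Proof.
  intros Hr HR.
  assert (Hc1 := sin2_cos2 al). assert (Hc2 := sin2_cos2 be). unfold Rsqr in *.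
  assert (Hcm : cos (al - be) = 1 - 2 * sin ((al - be) / 2) ^ 2).
  { replace (al - be) with (2 * ((al - be) / 2)) at 1 by field. rewrite cos_2a_sin. ring. }
  rewrite cos_minus in Hcm.
  set (tau := (ln r - ln R) / 2).
  assert (HE : exp tau * exp tau = r / R).
  { rewrite <- exp_plus. replace (tau + tau) with (ln r + - ln R) by (unfold tau; field).
    rewrite exp_plus, exp_Ropp, !exp_ln; auto. }
  assert (Hsh : 4 * r * R * sh tau ^ 2 = (r - R) ^ 2).
  { unfold sh. rewrite exp_Ropp. assert (0 < exp tau) by apply exp_pos. set (E := exp tau) in *.
    assert (Hr' : r = R * (E * E)) by (rewrite HE; field; lra).
    rewrite Hr'. field. lra. }
  match goal with |- ?L = ?Rr => assert (E1 : Rr = 4 * r * R * sh tau ^ 2 + 4 * r * R * sin ((al - be)/2) ^ 2) by ring end.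
  rewrite E1, Hsh.
  replace (4 * r * R * sin ((al - be) / 2) ^ 2) with (2 * r * R * (1 - (cos al * cos be + sin al * sin be))) by (rewrite Hcm; ring).
  nra.
Qed.

Lemma sec_polar th (x : C) : 0 < th < PI -> sector th x ->
  fst x = Cmod x * cos (Carg x) /\ snd x = Cmod x * sin (Carg x) /\ 0 < Carg x < th /\ 0 < Cmod x.
Proof.
  intros Hth Hx. assert (Hs := proj1 (proj1 (sector_iff th x Hth) Hx)).
  destruct Hx as [Hw [H1 H2]].
  destruct (polar x Hw ltac:(lra)) as [E1 [E2 [_ Hr]]]. repeat split; auto.
Qed.

Lemma Rpower_pos r a : 0 < Rpower r a.
Proof. unfold Rpower. apply exp_pos. Qed.

Lemma ln_Rpower r a : ln (Rpower r a) = a * ln r.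
Proof. unfold Rpower. apply ln_exp. Qed.

Lemma sin_PI_minus_a a th p : a * th = PI -> sin (a * (th - p)) = sin (a * p).
Proof. intros H. replace (a * (th - p)) with (PI - a * p) by (rewrite <- H; ring). apply sin_PI_x. Qed.

Lemma pair_bounds theta (x y : C) : 0 < theta < PI -> sector theta x -> sector theta y ->
  s_metric (sector theta) x y <= th (rho_S theta x y / 2) /\
  th (rho_S theta x y / 2) <= (PI / theta) * sin (theta / 2) * s_metric (sector theta) x y.
Proof.
  intros Hth Hx Hy.
  assert (HPI := PI_RGT_0).
  set (a := PI / theta).
  assert (Hath : a * theta = PI) by (unfold a; field; lra).
  assert (Ha : 1 <= a). { unfold a. apply (Rmult_le_reg_r theta). lra. field_simplify; lra. }
  destruct (sec_polar theta x Hth Hx) as [X1 [X2 [Hal Hr]]].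
  destruct (sec_polar theta y Hth Hy) as [Y1 [Y2 [Hbe HR]]].
  set (r := Cmod x) in *. set (al := Carg x) in *.
  set (R := Cmod y) in *. set (be := Carg y) in *.
  set (u := Cpow_pr x a). set (v := Cpow_pr y a).
  set (r1 := Rpower r a). set (r2 := Rpower R a).
  assert (Hr1 : 0 < r1) by apply Rpower_pos. assert (Hr2 : 0 < r2) by apply Rpower_pos.
  assert (U1 : fst u = r1 * cos (a * al)) by reflexivity.
  assert (U2 : snd u = r1 * sin (a * al)) by reflexivity.
  assert (V1 : fst v = r2 * cos (a * be)) by reflexivity.
  assert (V2 : snd v = r2 * sin (a * be)) by reflexivity.
  assert (Sal : 0 < sin (a * al)) by (apply sin_gt_0; nra).
  assert (Sbe : 0 < sin (a * be)) by (apply sin_gt_0; nra).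
  assert (Hu : 0 < snd u) by (rewrite U2; nra).
  assert (Hv : 0 < snd v) by (rewrite V2; nra).
  assert (HT : th (rho_S theta x y / 2) = Cmod (u - v) / Cmod (u - Cconj v)).
  { unfold rho_S. fold a. apply th_rho; auto. }
  rewrite HT.
  set (tau := (ln r - ln R) / 2).
  set (m := (al - be) / 2). set (p := (al + be) / 2).
  set (xs := sh tau ^ 2). set (XS := sh (a * tau) ^ 2).
  assert (Hxs : 0 <= xs) by (unfold xs; nra).
  assert (HXS : 0 <= XS) by (unfold XS; nra).
  assert (P2 : Cmod (x - y) ^ 2 = 4 * r * R * (xs + sin m ^ 2)).
  { rewrite Cmod_diff2, X1, X2, Y1, Y2. apply dist_polar; auto. }
  assert (Q2 : Cmod (x - Cconj y) ^ 2 = 4 * r * R * (xs + sin p ^ 2)).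
  { rewrite conj_dist, P2, X2, Y2.
    assert (H := sin2_diff p m). replace (p + m) with al in H by (unfold p, m; field).
    replace (p - m) with be in H by (unfold p, m; field). assert (Hp2 : sin p ^ 2 = sin m ^ 2 + sin al * sin be) by lra. rewrite Hp2. ring. }
  assert (Q'2 : Cmod (x - refl theta y) ^ 2 = 4 * r * R * (xs + sin (theta - p) ^ 2)).
  { rewrite refl_dist, P2. unfold Nf. rewrite X1, X2, Y1, Y2.
    assert (H := sin2_diff (theta - p) m). replace (theta - p + m) with (theta - be) in H by (unfold p, m; field).
    replace (theta - p - m) with (theta - al) in H by (unfold p, m; field).
    rewrite (sin_minus theta be), (sin_minus theta al) in H.
    assert (Hp2 : sin (theta - p) ^ 2 = sin m ^ 2 + (sin theta * cos be - cos theta * sin be) * (sin theta * cos al - cos theta * sin al)) by lra. rewrite Hp2. ring. }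
  assert (B2 : Cmod (u - v) ^ 2 = 4 * r1 * r2 * (XS + sin (a * m) ^ 2)).
  { rewrite Cmod_diff2, U1, U2, V1, V2. rewrite dist_polar; auto.
    unfold r1, r2. rewrite !ln_Rpower. unfold XS, tau, m.
    replace ((a * ln r - a * ln R) / 2) with (a * ((ln r - ln R) / 2)) by field.
    replace ((a * al - a * be) / 2) with (a * ((al - be) / 2)) by field. auto. }
  assert (A2 : Cmod (u - Cconj v) ^ 2 = 4 * r1 * r2 * (XS + sin (a * p) ^ 2)).
  { rewrite conj_dist, B2, U2, V2.
    assert (H := sin2_diff (a * p) (a * m)). replace (a * p + a * m) with (a * al) in H by (unfold p, m; field).
    replace (a * p - a * m) with (a * be) in H by (unfold p, m; field). assert (Hp2 : sin (a * p) ^ 2 = sin (a * m) ^ 2 + sin (a * al) * sin (a * be)) by lra. rewrite Hp2. ring. }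

  set (P := Cmod (x - y)) in *. set (Q := Cmod (x - Cconj y)) in *. set (Q' := Cmod (x - refl theta y)) in *.
  set (B := Cmod (u - v)) in *. set (A := Cmod (u - Cconj v)) in *.
  assert (HP : 0 <= P) by apply Cmod_ge_0. assert (HB : 0 <= B) by apply Cmod_ge_0.
  assert (HQ0 : 0 <= Q) by apply Cmod_ge_0. assert (HQ'0 : 0 <= Q') by apply Cmod_ge_0.
  assert (HA0 : 0 <= A) by apply Cmod_ge_0.
  assert (Sp : 0 < sin p) by (apply sin_gt_0; unfold p; lra).
  assert (Stp : 0 < sin (theta - p)) by (apply sin_gt_0; unfold p; lra).
  assert (Sap : 0 < sin (a * p)) by (apply sin_gt_0; unfold p; nra).
  assert (HrR : 0 < r * R) by nra. assert (Hr12 : 0 < r1 * r2) by nra.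
  assert (HQ : 0 < Q).
  { destruct HQ0 as [|E0]; auto. assert (0 < Q ^ 2) by (rewrite Q2; apply Rmult_lt_0_compat; nra). rewrite <- E0 in *. nra. }
  assert (HQ' : 0 < Q').
  { destruct HQ'0 as [|E0]; auto. assert (0 < Q' ^ 2) by (rewrite Q'2; apply Rmult_lt_0_compat; nra). rewrite <- E0 in *. nra. }
  assert (HA : 0 < A).
  { destruct HA0 as [|E0]; auto. assert (0 < A ^ 2) by (rewrite A2; apply Rmult_lt_0_compat; nra). rewrite <- E0 in *. nra. }
  assert (Hm1 : Rabs m < p /\ p + Rabs m < theta) by (unfold Rabs, m, p; destruct Rcase_abs; lra).
  assert (Hm2 : Rabs m < theta - p /\ theta - p + Rabs m < theta) by (unfold Rabs, m, p; destruct Rcase_abs; lra).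
  assert (K : 0 <= 16 * (r * R) * (r1 * r2)) by nra.
  assert (T1 : P / Q <= B / A).
  { apply ratio_le; auto.
    assert (L := core_L a tau m p Ha ltac:(lra) ltac:(nra) ltac:(lra)). fold xs XS in L.
    rewrite P2, Q2, A2, B2.
    replace (4 * r * R * (xs + sin m ^ 2) * (4 * r1 * r2 * (XS + sin (a * p) ^ 2))) with
      (16 * (r * R) * (r1 * r2) * ((xs + sin m ^ 2) * (XS + sin (a * p) ^ 2))) by ring.
    replace (4 * r1 * r2 * (XS + sin (a * m) ^ 2) * (4 * r * R * (xs + sin p ^ 2))) with
      (16 * (r * R) * (r1 * r2) * ((XS + sin (a * m) ^ 2) * (xs + sin p ^ 2))) by ring.
    apply Rmult_le_compat_l; auto. }
  assert (T2 : P / Q' <= B / A).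
  { apply ratio_le; auto.
    assert (L := core_L a tau m (theta - p) Ha ltac:(lra) ltac:(nra) ltac:(lra)). fold xs XS in L.
    rewrite (sin_PI_minus_a a theta p Hath) in L.
    rewrite P2, Q'2, A2, B2.
    replace (4 * r * R * (xs + sin m ^ 2) * (4 * r1 * r2 * (XS + sin (a * p) ^ 2))) with
      (16 * (r * R) * (r1 * r2) * ((xs + sin m ^ 2) * (XS + sin (a * p) ^ 2))) by ring.
    replace (4 * r1 * r2 * (XS + sin (a * m) ^ 2) * (4 * r * R * (xs + sin (theta - p) ^ 2))) with
      (16 * (r * R) * (r1 * r2) * ((XS + sin (a * m) ^ 2) * (xs + sin (theta - p) ^ 2))) by ring.
    apply Rmult_le_compat_l; auto. }
  set (m0 := Rmin Q Q').
  assert (Hm0 : 0 < m0) by (unfold m0, Rmin; destruct Rle_dec; lra).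
  assert (Tm : P / m0 <= B / A) by (unfold m0, Rmin; destruct Rle_dec; auto).
  unfold s_metric. fold P.
  set (E := fun t => exists z, boundary (sector theta) z /\ t = Cmod (x - z) + Cmod (z - y)).
  assert (Elb : forall t, E t -> m0 <= t).
  { intros t [z [Hz Ht]]. rewrite Ht. unfold m0, Q, Q'. apply bd_bound; auto. }
  assert (Hdiv : forall d, m0 <= d -> P / d <= P / m0).
  { intros d Hd. apply Rmult_le_compat_l; auto. apply Rinv_le_contravar; auto. }
  assert (HC : 0 < a * sin (theta / 2)).
  { assert (0 < sin (theta / 2)) by (apply sin_gt_0; lra). nra. }
  destruct (Rle_dec (al + be) theta) as [Hs|Hs].
  - destruct (seg_conj theta x y Hth Hx Hy) as [z [Hz Hzd]].
    { rewrite X1, X2, Y1, Y2.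
      assert (0 <= sin (al + be)) by (apply sin_ge_0; lra). rewrite sin_plus in *. nra. }
    assert (HE : E Q) by (exists z; split; auto).
    destruct (glb_bounds E m0 Q HE Elb) as [Hd1 Hd2].
    set (d := real (Glb_Rbar E)) in *.
    split. { eapply Rle_trans; [apply Hdiv; auto | auto]. }
    assert (U := core_U theta tau m p Hth ltac:(lra) ltac:(unfold p; lra)). fold a xs XS in U.
    assert (T3 : B / A <= (a * sin (theta / 2) * P) / Q).
    { apply ratio_le; auto. nra.
      rewrite Q2, A2, B2, Rpow_mult_distr, P2.
      apply Rle_trans with (16 * (r * R) * (r1 * r2) * ((XS + sin (a * m) ^ 2) * (xs + sin p ^ 2))).
      right; ring.
      apply Rle_trans with (16 * (r * R) * (r1 * r2) * ((a * sin (theta / 2)) ^ 2 * (xs + sin m ^ 2) * (XS + sin (a * p) ^ 2))).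
      2: right; ring.
      apply Rmult_le_compat_l; auto. }
    eapply Rle_trans; [exact T3|].
    unfold Rdiv. rewrite Rmult_assoc. apply Rmult_le_compat_l. lra.
    apply Rmult_le_compat_l; auto. apply Rinv_le_contravar; lra.
  - destruct (seg_refl theta x y Hth Hx Hy) as [z [Hz Hzd]].
    { unfold Df, Nf. rewrite X1, X2, Y1, Y2.
      assert (H0 : 0 <= sin ((theta - al) + (theta - be))) by (apply sin_ge_0; lra).
      rewrite sin_plus, !sin_minus, !cos_minus in H0.
      assert (E0 : r * cos al * cos theta + r * sin al * sin theta = r * (cos theta * cos al + sin theta * sin al)) by ring.
      nra. }
    assert (HE : E Q') by (exists z; split; auto).
    destruct (glb_bounds E m0 Q' HE Elb) as [Hd1 Hd2].
    set (d := real (Glb_Rbar E)) in *.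
    split. { eapply Rle_trans; [apply Hdiv; auto | auto]. }
    assert (U := core_U theta tau m (theta - p) Hth ltac:(lra) ltac:(unfold p; lra)). fold a xs XS in U.
    rewrite (sin_PI_minus_a a theta p Hath) in U.
    assert (T3 : B / A <= (a * sin (theta / 2) * P) / Q').
    { apply ratio_le; auto. nra.
      rewrite Q'2, A2, B2, Rpow_mult_distr, P2.
      apply Rle_trans with (16 * (r * R) * (r1 * r2) * ((XS + sin (a * m) ^ 2) * (xs + sin (theta - p) ^ 2))).
      right; ring.
      apply Rle_trans with (16 * (r * R) * (r1 * r2) * ((a * sin (theta / 2)) ^ 2 * (xs + sin m ^ 2) * (XS + sin (a * p) ^ 2))).
      2: right; ring.
      apply Rmult_le_compat_l; auto. }
    eapply Rle_trans; [exact T3|].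
    unfold Rdiv. rewrite Rmult_assoc. apply Rmult_le_compat_l. lra.
    apply Rmult_le_compat_l; auto. apply Rinv_le_contravar; lra.
Qed.

Lemma s_bounds theta (x y : C) : 0 < theta < PI -> sector theta x -> sector theta y ->
  0 < Rmin (Cmod (x - Cconj y)) (Cmod (x - refl theta y)) /\
  s_metric (sector theta) x y <= Cmod (x - y) / Rmin (Cmod (x - Cconj y)) (Cmod (x - refl theta y)) /\
  (0 <= fst x * snd y + fst y * snd x ->
     Cmod (x - y) / Cmod (x - Cconj y) <= s_metric (sector theta) x y).
Proof.
  intros Hth Hx Hy.
  assert (Hx' := proj1 (sector_iff theta x Hth) Hx).
  assert (Hy' := proj1 (sector_iff theta y Hth) Hy).
  set (P := Cmod (x - y)). set (Q := Cmod (x - Cconj y)). set (Q' := Cmod (x - refl theta y)).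
  assert (HP : 0 <= P) by apply Cmod_ge_0.
  assert (HQ : 0 < Q).
  { assert (H := conj_dist x y). fold Q in H. assert (0 <= Q) by apply Cmod_ge_0.
    assert (0 <= Cmod (x - y) ^ 2) by nra. nra. }
  assert (HQ' : 0 < Q').
  { assert (H := refl_dist theta x y). fold Q' in H. assert (0 <= Q') by apply Cmod_ge_0.
    assert (0 <= Cmod (x - y) ^ 2) by nra. unfold Nf in H. nra. }
  set (m0 := Rmin Q Q').
  assert (Hm0 : 0 < m0) by (unfold m0, Rmin; destruct Rle_dec; lra).
  set (E := fun t => exists z, boundary (sector theta) z /\ t = Cmod (x - z) + Cmod (z - y)).
  assert (Elb : forall t, E t -> m0 <= t).
  { intros t [z [Hz Ht]]. rewrite Ht. unfold m0, Q, Q'. apply bd_bound; auto. }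
  set (z0 := (0 * cos theta, 0 * sin theta) : C).
  assert (E0 : E (Cmod (x - z0) + Cmod (z0 - y))).
  { exists z0. split; auto. apply bd_rayth; lra. }
  destruct (glb_bounds E m0 _ E0 Elb) as [Hd1 _].
  unfold s_metric. fold P. fold E.
  set (d := real (Glb_Rbar E)) in *.
  split; auto. split.
  - apply Rmult_le_compat_l; auto. apply Rinv_le_contravar; auto.
  - intros Hc. destruct (seg_conj theta x y Hth Hx Hy Hc) as [z [Hz Hzd]].
    assert (HE : E Q) by (exists z; split; auto).
    destruct (glb_bounds E m0 Q HE Elb) as [_ Hd2].
    fold d in Hd2. apply Rmult_le_compat_l; auto. apply Rinv_le_contravar; lra.
Qed.

Lemma Cmod_polar R phi : 0 <= R -> Cmod (R * cos phi, R * sin phi) = R.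
Proof.
  intros HR. replace R with (R * 1) at 3 by ring.
  assert (Cmod (R * cos phi, R * sin phi) = R * Cmod (1, 0)).
  { apply Cmod_sq_eq_scal; auto. rewrite !Cmod2. simpl.
    assert (H := sin2_cos2 phi). unfold Rsqr in H. nra. }
  rewrite H. unfold Cmod. simpl. replace (1 * (1 * 1) + 0 * (0 * 1)) with 1 by ring. rewrite sqrt_1. ring.
Qed.

Lemma Cmod_sq_eq (z : C) k : 0 <= k -> Cmod z ^ 2 = k ^ 2 -> Cmod z = k.
Proof. intros Hk H. assert (0 <= Cmod z) by apply Cmod_ge_0. nra. Qed.

Lemma Carg_polar R phi : 0 < R -> 0 <= phi <= PI -> Carg (R * cos phi, R * sin phi) = phi.
Proof.
  intros HR Hp. unfold Carg. rewrite Cmod_polar by lra. unfold Re, Im. simpl.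
  destruct (Rle_dec 0 (R * sin phi)) as [_|N].
  - replace (R * cos phi / R) with (cos phi) by (field; lra). apply acos_cos; auto.
  - exfalso. assert (0 <= sin phi) by (apply sin_ge_0; lra). nra.
Qed.

Lemma ray_pair theta R : 0 < theta < PI -> 1 < R ->
  sector theta (cos (theta / 2), sin (theta / 2)) /\
  sector theta (R * cos (theta / 2), R * sin (theta / 2)) /\
  (cos (theta / 2), sin (theta / 2)) <> (R * cos (theta / 2), R * sin (theta / 2)) /\
  th (rho_S theta (cos (theta / 2), sin (theta / 2)) (R * cos (theta / 2), R * sin (theta / 2)) / 2)
    = (Rpower R (PI / theta) - 1) / (Rpower R (PI / theta) + 1) /\
  Cmod ((cos (theta / 2), sin (theta / 2)) - (R * cos (theta / 2), R * sin (theta / 2))) = R - 1 /\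
  Cmod ((cos (theta / 2), sin (theta / 2)) - Cconj (R * cos (theta / 2), R * sin (theta / 2))) ^ 2
    = (R - 1) ^ 2 + 4 * R * sin (theta / 2) ^ 2 /\
  Cmod ((cos (theta / 2), sin (theta / 2)) - refl theta (R * cos (theta / 2), R * sin (theta / 2))) ^ 2
    = (R - 1) ^ 2 + 4 * R * sin (theta / 2) ^ 2 /\
  0 <= cos (theta / 2) * (R * sin (theta / 2)) + R * cos (theta / 2) * sin (theta / 2).
Proof.
  intros Hth HR.
  assert (HPI := PI_RGT_0).
  set (cx := cos (theta / 2)). set (sx := sin (theta / 2)).
  assert (Hsx : 0 < sx) by (apply sin_gt_0; lra).
  assert (Hcx : 0 < cx) by (apply cos_gt_0; lra).
  assert (Hc := sin2_cos2 (theta / 2)). unfold Rsqr in Hc. fold cx sx in Hc.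
  assert (Hh := half_angle theta). fold cx sx in Hh.
  assert (Nx : Nf theta (cx, sx) = sx) by (unfold Nf; simpl; lra).
  assert (Ny : Nf theta (R * cx, R * sx) = R * sx) by (unfold Nf; simpl; nra).
  assert (Sx : sector theta (cx, sx)).
  { apply sector_iff; auto. simpl. split; auto. fold (Nf theta (cx, sx)). lra. }
  assert (Sy : sector theta (R * cx, R * sx)).
  { apply sector_iff; auto. simpl. split. nra. fold (Nf theta (R * cx, R * sx)). nra. }
  assert (P2 : Cmod ((cx, sx) - (R * cx, R * sx)) ^ 2 = (R - 1) ^ 2).
  { rewrite Cmod_diff2. simpl. nra. }
  split; auto. split; auto. split.
  { intros E. injection E. intros _ E1. nra. }
  split.
  - unfold rho_S. set (a := PI / theta).
    assert (Ha : 0 < a) by (unfold a; apply Rdiv_lt_0_compat; lra).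
    assert (Eca : a * (theta / 2) = PI / 2) by (unfold a; field; lra).
    assert (Hx1 : Cmod (cx, sx) = 1).
    { replace (cx, sx) with (1 * cx, 1 * sx) by (f_equal; ring). apply Cmod_polar; lra. }
    assert (Ax : Carg (cx, sx) = theta / 2).
    { replace (cx, sx) with (1 * cx, 1 * sx) by (f_equal; ring). apply Carg_polar; lra. }
    assert (Hy1 : Cmod (R * cx, R * sx) = R) by (apply Cmod_polar; lra).
    assert (Ay : Carg (R * cx, R * sx) = theta / 2) by (apply Carg_polar; lra).
    unfold Cpow_pr. rewrite Hx1, Ax, Hy1, Ay, Eca, cos_PI2, sin_PI2.
    assert (R1 : Rpower 1 a = 1) by (unfold Rpower; rewrite ln_1, Rmult_0_r; apply exp_0).
    rewrite R1.
    assert (HRa : 1 < Rpower R a).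
    { unfold Rpower. rewrite <- exp_0. apply exp_increasing. assert (0 < ln R) by (rewrite <- ln_1; apply ln_increasing; lra). nra. }
    set (r2 := Rpower R a) in *.
    rewrite th_rho by (simpl; lra).
    assert (B : Cmod ((1 * 0, 1 * 1) - (r2 * 0, r2 * 1)) = r2 - 1).
    { apply Cmod_sq_eq. lra.
      rewrite Cmod_diff2. simpl. ring. }
    assert (A : Cmod ((1 * 0, 1 * 1) - Cconj (r2 * 0, r2 * 1)) = r2 + 1).
    { apply Cmod_sq_eq. lra.
      rewrite Cmod_diff2. simpl. ring. }
    rewrite B, A. reflexivity.
  - split.
    { apply Cmod_sq_eq; auto. lra. }
    split.
    { rewrite conj_dist, P2. simpl. ring. }
    split.
    { rewrite refl_dist, P2, Nx, Ny. ring. }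
    assert (0 < cx * (R * sx)) by (apply Rmult_lt_0_compat; nra). nra.
Qed.

Lemma sharp1 theta c : 0 < theta < PI -> 1 < c -> exists x y : C, sector theta x /\ sector theta y /\ x <> y /\
     th (rho_S theta x y / 2) < c * s_metric (sector theta) x y.
Proof.
  intros Hth Hc.
  set (k := c ^ 2 - 1). assert (Hk : 0 < k) by (unfold k; nra).
  set (w := 2 + 4 / k). assert (Hw : 2 < w) by (unfold w; assert (0 < 4 / k) by (apply Rdiv_lt_0_compat; lra); lra).
  assert (Hkw : k * w = 2 * k + 4) by (unfold w; field; lra).
  set (R := 1 + w).
  destruct (ray_pair theta R Hth ltac:(unfold R; lra)) as [Sx [Sy [Nxy [HT [HP [HQ [HQ' Hc0]]]]]]].
  set (x := (cos (theta / 2), sin (theta / 2)) : C) in *.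
  set (y := (R * cos (theta / 2), R * sin (theta / 2)) : C) in *.
  exists x, y. split; auto. split; auto. split; auto.
  destruct (s_bounds theta x y Hth Sx Sy) as [_ [_ Hlow]].
  assert (Hs := Hlow Hc0).
  rewrite HP in Hs.
  set (Q := Cmod (x - Cconj y)) in *.
  assert (HQ0 : 0 <= Q) by apply Cmod_ge_0.
  assert (Hsx : sin (theta / 2) ^ 2 <= 1).
  { assert (H := sin2_cos2 (theta / 2)). unfold Rsqr in H. nra. }
  assert (HQlt : Q < c * (R - 1)).
  { assert (Q ^ 2 < (c * (R - 1)) ^ 2).
    { rewrite HQ. unfold R. replace (1 + w - 1) with w by ring.
      assert (4 * (1 + w) * sin (theta / 2) ^ 2 <= 4 * (1 + w)) by nra.
      assert (k * w * w > 4 + 4 * w) by nra.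
      unfold k in *. nra. }
    assert (0 < c * (R - 1)) by (unfold R; nra). nra. }
  assert (HQp : 0 < Q).
  { assert (0 < Q ^ 2) by (rewrite HQ; unfold R; replace (1 + w - 1) with w by ring; assert (0 <= 4 * (1 + w) * sin (theta / 2) ^ 2) by (apply Rmult_le_pos; nra); nra). nra. }
  assert (T1 : th (rho_S theta x y / 2) < 1).
  { rewrite HT. set (r2 := Rpower R (PI / theta)). assert (0 < r2) by apply Rpower_pos.
    apply (Rmult_lt_reg_r (r2 + 1)). lra. field_simplify; lra. }
  assert (1 < c * ((R - 1) / Q)).
  { apply (Rmult_lt_reg_r Q); auto. field_simplify; lra. }
  assert (c * ((R - 1) / Q) <= c * s_metric (sector theta) x y) by (apply Rmult_le_compat_l; lra).
  lra.
Qed.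

Lemma sharp2 theta c : 0 < theta < PI -> c < (PI / theta) * sin (theta / 2) ->
  exists x y : C, sector theta x /\ sector theta y /\ x <> y /\
     c * s_metric (sector theta) x y < th (rho_S theta x y / 2).
Proof.
  intros Hth Hc.
  assert (HPI := PI_RGT_0).
  set (a := PI / theta) in *.
  assert (Ha : 1 <= a). { unfold a. apply (Rmult_le_reg_r theta). lra. field_simplify; lra. }
  set (sx := sin (theta / 2)) in *.
  assert (Hsx : 0 < sx) by (apply sin_gt_0; lra).
  set (CC := a * sx) in *.
  assert (HCC : 0 < CC) by (unfold CC; nra).
  destruct (Rle_or_lt c 0) as [Hc0|Hc0].
  - destruct (ray_pair theta 2 Hth ltac:(lra)) as [Sx [Sy [Nxy [HT [HP [HQ [HQ' Hc1]]]]]]].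
    set (x := (cos (theta / 2), sin (theta / 2)) : C) in *.
    set (y := (2 * cos (theta / 2), 2 * sin (theta / 2)) : C) in *.
    exists x, y. split; auto. split; auto. split; auto.
    destruct (s_bounds theta x y Hth Sx Sy) as [_ [_ Hlow]].
    assert (Hs := Hlow Hc1). rewrite HP in Hs.
    assert (0 <= (2 - 1) / Cmod (x - Cconj y)).
    { apply Rdiv_le_0_compat. lra. destruct (Cmod_ge_0 (x - Cconj y)) as [|E0]; auto.
      exfalso. rewrite <- E0 in HQ. assert (0 <= 4 * 2 * sin (theta / 2) ^ 2) by nra. nra. }
    assert (c * s_metric (sector theta) x y <= 0) by nra.
    rewrite HT. fold a. set (r2 := Rpower 2 a).
    assert (1 < r2).
    { unfold r2, Rpower. rewrite <- exp_0. apply exp_increasing. assert (0 < ln 2) by (rewrite <- ln_1; apply ln_increasing; lra). nra. }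
    assert (0 < (r2 - 1) / (r2 + 1)) by (apply Rdiv_lt_0_compat; lra). lra.
  - set (q := CC / c).
    assert (Hq : 1 < q) by (unfold q; apply (Rmult_lt_reg_r c); auto; field_simplify; lra).
    set (sg := ln q / (2 * a)).
    assert (Hlq : 0 < ln q) by (rewrite <- ln_1; apply ln_increasing; lra).
    assert (Hsg : 0 < sg) by (unfold sg; apply Rdiv_lt_0_compat; lra).
    set (Ee := exp sg). set (R := Ee * Ee).
    assert (HEe : 1 < Ee) by (unfold Ee; rewrite <- exp_0; apply exp_increasing; lra).
    assert (HR : 1 < R) by (unfold R; nra).
    destruct (ray_pair theta R Hth HR) as [Sx [Sy [Nxy [HT [HP [HQ [HQ' Hc1]]]]]]].
    set (x := (cos (theta / 2), sin (theta / 2)) : C) in *.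
    set (y := (R * cos (theta / 2), R * sin (theta / 2)) : C) in *.
    exists x, y. split; auto. split; auto. split; auto.
    destruct (s_bounds theta x y Hth Sx Sy) as [Hm0 [Hup _]].
    rewrite HP in Hup. fold a in HT. rewrite HT.
    set (Ea := exp (a * sg)).
    assert (HEa : 1 < Ea) by (unfold Ea; rewrite <- exp_0; apply exp_increasing; nra).
    assert (Hr2 : Rpower R a = Ea * Ea).
    { unfold Rpower, R, Ee, Ea. rewrite <- exp_plus, ln_exp, <- exp_plus. f_equal. ring. }
    assert (HEa2 : Ea * Ea = q).
    { unfold Ea. rewrite <- exp_plus. replace (a * sg + a * sg) with (ln q) by (unfold sg; field; lra).
      apply exp_ln; lra. }
    rewrite Hr2.
    set (Q := Cmod (x - Cconj y)) in *. set (Q' := Cmod (x - refl theta y)) in *.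
    assert (HQ0 : 0 <= Q) by apply Cmod_ge_0. assert (HQ'0 : 0 <= Q') by apply Cmod_ge_0.
    fold sx in HQ, HQ'.
    assert (Hpos : 0 < 2 * Ee * sx) by nra.
    assert (Qb : 2 * Ee * sx <= Q).
    { assert ((2 * Ee * sx) ^ 2 <= Q ^ 2) by (rewrite HQ; unfold R; replace ((2 * Ee * sx) ^ 2) with (4 * (Ee * Ee) * sx ^ 2) by ring; assert (0 <= (Ee * Ee - 1) ^ 2) by apply pow2_ge_0; lra). nra. }
    assert (Q'b : 2 * Ee * sx <= Q').
    { assert ((2 * Ee * sx) ^ 2 <= Q' ^ 2) by (rewrite HQ'; unfold R; replace ((2 * Ee * sx) ^ 2) with (4 * (Ee * Ee) * sx ^ 2) by ring; assert (0 <= (Ee * Ee - 1) ^ 2) by apply pow2_ge_0; lra). nra. }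
    assert (Mb : 2 * Ee * sx <= Rmin Q Q') by (unfold Rmin; destruct Rle_dec; lra).
    assert (S1 : (R - 1) / Rmin Q Q' <= (R - 1) / (2 * Ee * sx)).
    { apply Rmult_le_compat_l. lra. apply Rinv_le_contravar; auto. }
    set (shs := (Ee - / Ee) / 2). set (sha := (Ea - / Ea) / 2). set (cha := (Ea + / Ea) / 2).
    assert (F : a * shs <= sha).
    { assert (H := F2 a sg Ha ltac:(lra)). unfold sh in H. rewrite !exp_Ropp in H. exact H. }
    assert (HEi : 0 < / Ee < 1) by (split; [apply Rinv_0_lt_compat; lra | rewrite <- Rinv_1; apply Rinv_lt_contravar; lra]).
    assert (HEai : 0 < / Ea < 1) by (split; [apply Rinv_0_lt_compat; lra | rewrite <- Rinv_1; apply Rinv_lt_contravar; lra]).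
    assert (Hshs : 0 < shs) by (unfold shs; lra).
    assert (Hcha : 0 < cha) by (unfold cha; lra).
    assert (Hcq : c * cha < CC).
    { assert (cha < q) by (unfold cha; nra).
      unfold q in H. apply (Rmult_lt_compat_l c) in H; auto.
      replace (c * (CC / c)) with CC in H by (field; lra). lra. }
    assert (E1 : (R - 1) / (2 * Ee * sx) = shs / sx).
    { unfold R, shs. field. split; lra. }
    assert (E2 : (Ea * Ea - 1) / (Ea * Ea + 1) = sha / cha).
    { unfold sha, cha. field. split; nra. }
    rewrite E2.
    assert (K : c * (shs / sx) < sha / cha).
    { apply (Rmult_lt_reg_r (sx * cha)). nra.
      replace (c * (shs / sx) * (sx * cha)) with (c * cha * shs) by (field; lra).
      replace (sha / cha * (sx * cha)) with (sx * sha) by (field; lra).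
      assert (c * cha * shs < CC * shs) by (apply Rmult_lt_compat_r; lra).
      unfold CC in *. nra. }
    assert (c * s_metric (sector theta) x y <= c * (shs / sx)).
    { apply Rmult_le_compat_l. lra. rewrite <- E1. lra. }
    lra.
Qed.

Theorem theorem4p5 (theta : R) (Htheta : 0 < theta < PI) :
  (forall x y : C, sector theta x -> sector theta y ->
     s_metric (sector theta) x y <= th (rho_S theta x y / 2) /\
     th (rho_S theta x y / 2) <= (PI / theta) * sin (theta / 2) * s_metric (sector theta) x y)
  /\
  (forall c : R, 1 < c -> exists x y : C, sector theta x /\ sector theta y /\ x <> y /\
     th (rho_S theta x y / 2) < c * s_metric (sector theta) x y)
  /\
  (forall c : R, c < (PI / theta) * sin (theta / 2) ->
     exists x y : C, sector theta x /\ sector theta y /\ x <> y /\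
     c * s_metric (sector theta) x y < th (rho_S theta x y / 2)).
Proof.
  split; [|split].
  - intros x y Hx Hy. apply pair_bounds; auto.
  - intros c Hc. apply sharp1; auto.
  - intros c Hc. apply sharp2; auto.
Qed.
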